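(* A real symmetric $3\times 3$ matrix $A$ has symmetric Kapranov rank two if and only if it has symmetric tropical rank two.
   Context: Let $\tilde K$ be the field of Hahn series $\sum_{\alpha\in A}c_\alpha t^\alpha$ ($A\subset\mathbb R$ well-ordered, $c_\alpha\in\mathbb C$); for nonzero $a\in\tilde K$, $\deg(a)$ is the smallest exponent with nonzero coefficient. A symmetric lift of a real symmetric matrix $A$ is a symmetric matrix $\tilde A$ over $\tilde K$ with all entries nonzero and $\deg(\tilde a_{i,j})=A_{i,j}$; the symmetric Kapranov rank of $A$ is the minimum rank of a symmetric lift. For an $r\times r$ submatrix of $A$ with row index set $I$ and column index set $J$, each bijection $\rho:I\to J$ gives a monomial $\prod_{i\in I}X_{i,\rho(i)}$ in commuting variables subject to $X_{i,j}=X_{j,i}$, with value $\sum_{i\in I}A_{i,\rho(i)}$; the submatrix is symmetrically tropically singular if the minimum value is attained by at least two distinct monomials. The symmetric tropical rank of $A$ is the largest $r$ such that $A$ has an $r\times r$ submatrix that is not symmetrically tropically singular. *)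

(* Defs.v *)
From HB Require Import structures.
From mathcomp Require Import all_boot all_order all_algebra all_fingroup.
From mathcomp Require Import complex.
From mathcomp Require Import boolp classical_sets functions cardinality fsbigop.
From mathcomp Require Import reals Rstruct.
From Stdlib Require Import Rdefinitions.

Set Implicit Arguments.
Unset Strict Implicit.
Unset Printing Implicit Defensive.
Import Order.TTheory GRing.Theory Num.Theory.
Local Open Scope classical_set_scope.
Local Open Scope ring_scope.

Local Open Scope complex_scope.
Definition CC : Type := (Rdefinitions.R)[i].
Local Close Scope complex_scope.

(** Formal series over C with real exponents: a coefficient function. *)
Definition series := Rdefinitions.R -> CC.

Definition supp (a : series) : set Rdefinitions.R := [set x | a x != 0].

Definition is_hahn (a : series) : Prop :=
  forall S : set Rdefinitions.R, S `<=` supp a -> S !=set0 ->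
    exists m, S m /\ (forall x, S x -> (m <= x)%R).

Definition hzero : series := fun _ => 0.
Definition hone : series := fun x => if x == 0%R then 1 else 0.
Definition hadd (a b : series) : series := fun x => a x + b x.
Definition hopp (a : series) : series := fun x => - a x.
(** Cauchy product: the sum is finite when a and b are Hahn series. *)
Definition hmul (a b : series) : series := fun g =>
  \sum_(x \in [set x : Rdefinitions.R | a x != 0 /\ b (g - x)%R != 0]) (a x * b (g - x)%R).

Definition has_deg (a : series) (d : Rdefinitions.R) : Prop :=
  a d != 0 /\ forall x, (x < d)%R -> a x = 0.

Definition minor (n k : nat) (M : 'I_n -> 'I_n -> series) (f g : 'I_k -> 'I_n) : series :=
  \big[hadd/hzero]_(s : 'S_k)
     ((if odd_perm s then hopp else id) (\big[hmul/hone]_(i : 'I_k) M (f i) (g (s i)))).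

Definition has_nonzero_minor (n : nat) (M : 'I_n -> 'I_n -> series) (k : nat) : Prop :=
  exists f g : 'I_k -> 'I_n, injective f /\ injective g /\ minor M f g <> hzero.

Definition rank_is (n : nat) (M : 'I_n -> 'I_n -> series) (r : nat) : Prop :=
  has_nonzero_minor M r /\ forall k : nat, leq r.+1 k -> ~ has_nonzero_minor M k.

Definition sym_lift (n : nat) (A : 'M[Rdefinitions.R]_n) (L : 'I_n -> 'I_n -> series) : Prop :=
  (forall i j, L i j = L j i) /\
  (forall i j, is_hahn (L i j)) /\
  (forall i j, L i j <> hzero) /\
  (forall i j, has_deg (L i j) (A i j)).

Definition sym_kapranov_rank_is (n : nat) (A : 'M[Rdefinitions.R]_n) (r : nat) : Prop :=
  (exists L, sym_lift A L /\ rank_is L r) /\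
  (forall L s, sym_lift A L -> rank_is L s -> leq r s).

(** Tropical side.  An r x r submatrix is given by injective row/column index
    maps f, g : 'I_r -> 'I_n; bijections rho : I -> J correspond to permutations
    s of 'I_r via rho (f i) = g (s i). *)
(** Monomial of s: multiplicity of the variable X_{p,q} = X_{q,p}. *)
Definition sym_monomial (n r : nat) (f g : 'I_r -> 'I_n) (s : 'S_r) (p q : 'I_n) : nat :=
  #|[set i : 'I_r | ((f i == p) && (g (s i) == q)) || ((f i == q) && (g (s i) == p))]|.

Definition trop_value (n r : nat) (A : 'M[Rdefinitions.R]_n) (f g : 'I_r -> 'I_n) (s : 'S_r)
  : Rdefinitions.R := \sum_(i : 'I_r) A (f i) (g (s i)).

Definition sym_trop_singular (n r : nat) (A : 'M[Rdefinitions.R]_n) (f g : 'I_r -> 'I_n) : Prop :=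
  exists s1 s2 : 'S_r,
    (forall s, (trop_value A f g s1 <= trop_value A f g s)%R) /\
    trop_value A f g s1 = trop_value A f g s2 /\
    (exists p q, sym_monomial f g s1 p q <> sym_monomial f g s2 p q).

Definition sym_trop_rank_is (n : nat) (A : 'M[Rdefinitions.R]_n) (r : nat) : Prop :=
  (exists f g : 'I_r -> 'I_n, injective f /\ injective g /\ ~ sym_trop_singular A f g) /\
  (forall (k : nat) (f g : 'I_k -> 'I_n), injective f -> injective g ->
      ~ sym_trop_singular A f g -> leq k r).

(* Main.v *)
Require Import Defs.
From HB Require Import structures.
From mathcomp Require Import all_boot all_order all_algebra all_fingroup.
From mathcomp Require Import complex.
From mathcomp Require Import boolp classical_sets functions cardinality fsbigop.
From mathcomp Require Import reals Rstruct.
From Stdlib Require Import Rdefinitions.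
From mathcomp Require Import finmap.
From mathcomp.multinomials Require Import monalg.
From mathcomp Require Import ring lra.
From Stdlib Require Import Classical.
Set Implicit Arguments.
Unset Strict Implicit.
Unset Printing Implicit Defensive.
Import Order.TTheory GRing.Theory Num.Theory.
Local Open Scope ring_scope.

Notation RR := Rdefinitions.R.
Definition MA := malg RR CC.
HB.instance Definition _ := GRing.Lmodule.on MA.

Section MARing.

Implicit Types (g : MA) (k : RR).

Local Notation "g1 *M_[ k1 , k2 ] g2" :=
  << g1@_k1 * g2@_k2 *g (k1 + k2) >>
  (at level 40, no associativity, format "g1  *M_[ k1 ,  k2 ]  g2").

Definition maone : MA := << (0 : RR) >>.
Definition mamul g1 g2 : MA :=
  \sum_(k1 <- msupp g1) \sum_(k2 <- msupp g2) g1 *M_[k1, k2] g2.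

Lemma mmull g1 g2 :
  mamul g1 g2 = \sum_(k1 <- msupp g1) \sum_(k2 <- msupp g2) g1 *M_[k1, k2] g2.
Proof. by []. Qed.

Lemma mmulr g1 g2 :
  mamul g1 g2 = \sum_(k2 <- msupp g2) \sum_(k1 <- msupp g1) g1 *M_[k1, k2] g2.
Proof. by rewrite mmull exchange_big. Qed.

Lemma mmullw (d1 d2 : {fset RR}) g1 g2 :
  (msupp g1 `<=` d1)%fset -> (msupp g2 `<=` d2)%fset ->
  mamul g1 g2 = \sum_(k1 <- d1) \sum_(k2 <- d2) g1 *M_[k1, k2] g2.
Proof.
move=> le_d1 le_d2; rewrite mmull (big_fset_incl _ le_d1) /=.
  apply/eq_bigr=> k1 _; apply/big_fset_incl => // k _ /mcoeff_outdom ->.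
  by rewrite mulr0 monalgU0.
move=> k _ /mcoeff_outdom g1k.
by rewrite big1 => // k' _; rewrite g1k mul0r monalgU0.
Qed.

Lemma mmulrw (d1 d2 : {fset RR}) g1 g2 : (msupp g1 `<=` d1)%fset -> (msupp g2 `<=` d2)%fset
  -> mamul g1 g2 = \sum_(k2 <- d2) \sum_(k1 <- d1) g1 *M_[k1, k2] g2.
Proof. by move=> le_d1 le_d2; rewrite (mmullw le_d1 le_d2) exchange_big. Qed.

Lemma mmul0g : left_zero 0 mamul.
Proof. by move=> g; rewrite mmull msupp0 big_seq_fset0. Qed.

Lemma mmulg0 : right_zero 0 mamul.
Proof. by move=> g; rewrite mmulr msupp0 big_seq_fset0. Qed.

Lemma mmulUg c k g :
  mamul << c *g k >> g = \sum_(k' <- msupp g) << c * g@_k' *g (k + k') >>.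
Proof.
rewrite (mmullw msuppU_le (fsubset_refl _)) big_seq_fset1.
by apply/eq_bigr => k' _; rewrite mcoeffUU.
Qed.

Lemma mmulgU c k g :
  mamul g << c *g k >> = \sum_(k' <- msupp g) << g@_k' * c *g (k' + k) >>.
Proof.
rewrite (mmulrw (fsubset_refl _) msuppU_le) big_seq_fset1.
by apply/eq_bigr=> k' _; rewrite mcoeffUU.
Qed.

Lemma mmulUU c1 c2 k1 k2 :
  mamul << c1 *g k1 >> << c2 *g k2 >> = << c1 * c2 *g (k1 + k2) >>.
Proof. by rewrite (mmulrw msuppU_le msuppU_le) !big_seq_fset1 !mcoeffUU. Qed.

Lemma mmulEl1 g1 g2 :
  mamul g1 g2 = \sum_(k1 <- msupp g1) mamul << g1@_k1 *g k1 >> g2.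
Proof. by apply/eq_bigr=> k _; rewrite mmulUg. Qed.

Lemma mmulEr1 g1 g2 :
  mamul g1 g2 = \sum_(k2 <- msupp g2) mamul g1 << g2@_k2 *g k2 >>.
Proof. by rewrite mmulr; apply/eq_bigr=> k _; rewrite mmulgU. Qed.

Lemma mmul1g : left_id maone mamul.
Proof.
move=> g; rewrite mmulUg [RHS]monalgE.
by apply/eq_bigr=> kg _; rewrite mul1r add0r.
Qed.

Lemma mmulg1 : right_id maone mamul.
Proof.
move=> g; rewrite mmulgU [RHS]monalgE.
by apply/eq_bigr=> k _; rewrite mulr1 addr0.
Qed.

Lemma mmulgDl : left_distributive mamul +%R.
Proof.
move=> g1 g2 g; rewrite [in RHS](mmullw (fsubsetUl _ (msupp g2)) (fsubset_refl _)).
rewrite [in RHS](mmullw (fsubsetUr (msupp g1) _) (fsubset_refl _)).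
rewrite (mmullw (msuppD_le _ _) (fsubset_refl _)).
rewrite -big_split /=; apply/eq_bigr=> k1 _.
rewrite -big_split /=; apply/eq_bigr=> k2 _.
by rewrite mcoeffD mulrDl monalgUD.
Qed.

Lemma mmulgDr : right_distributive mamul +%R.
Proof.
move=> g g1 g2; rewrite [in RHS](mmulrw (fsubset_refl _) (fsubsetUl _ (msupp g2))).
rewrite [in RHS](mmulrw (fsubset_refl _) (fsubsetUr (msupp g1) _)).
rewrite (mmulrw (fsubset_refl _) (msuppD_le _ _)).
rewrite -big_split /=; apply/eq_bigr => k1 _.
rewrite -big_split /=; apply/eq_bigr => k2 _.
by rewrite mcoeffD mulrDr monalgUD.
Qed.

Lemma mmulA : associative mamul.
Proof.
move=> g1 g2 g3.
rewrite [RHS](big_morph (mamul^~ _) (fun _ _ => mmulgDl _ _ _) (mmul0g _)).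
rewrite mmulEl1; apply/eq_bigr=> k1 _.
rewrite [LHS](big_morph (mamul _) (fun _ _ => mmulgDr _ _ _) (mmulg0 _)).
rewrite [RHS](big_morph (mamul^~ _) (fun _ _ => mmulgDl _ _ _) (mmul0g _)).
apply/eq_bigr=> k2 _.
rewrite [LHS](big_morph (mamul _) (fun _ _ => mmulgDr _ _ _) (mmulg0 _)).
by rewrite mmulEr1; apply/eq_bigr=> k3 _; rewrite !mmulUU mulrA addrA.
Qed.

Lemma mone_neq0 : maone != 0.
Proof. by apply/eqP/malgP=> /(_ (0:RR)) /eqP; rewrite !mcoeffsE oner_eq0. Qed.

HB.instance Definition _ := GRing.Zmodule_isRing.Build MA
  mmulA mmul1g mmulg1 mmulgDl mmulgDr mone_neq0.

Lemma mmulC : @commutative MA _ mamul.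
Proof.
move=> g1 g2; rewrite mmull mmulr.
apply/eq_bigr=> /= k1 _; apply/eq_bigr=> /= k2 _.
by rewrite mulrC addrC.
Qed.


HB.instance Definition _ := GRing.Ring_hasCommutativeMul.Build MA mmulC.
End MARing.

Ltac rn := repeat match goal with
 | H : context [Rplus ?a ?b] |- _ => rewrite (RplusE a b) in H
 | |- context [Rplus ?a ?b] => rewrite (RplusE a b)
 | H : context [Rminus ?a ?b] |- _ => rewrite (RminusE a b) in H
 | |- context [Rminus ?a ?b] => rewrite (RminusE a b)
 | H : context [Ropp ?a] |- _ => rewrite (RoppE a) in H
 | |- context [Ropp ?a] => rewrite (RoppE a)
 | H : context [Rmult ?a ?b] |- _ => rewrite (RmultE a b) in H
 | |- context [Rmult ?a ?b] => rewrite (RmultE a b)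
 | H : context [IZR 0] |- _ => rewrite R0E in H
 | |- context [IZR 0] => rewrite R0E
 | H : context [IZR 1] |- _ => rewrite R1E in H
 | |- context [IZR 1] => rewrite R1E
 end.

Definition lowz (a : series) (v : RR) := forall x : RR, x < v -> a x = 0.

Lemma hmul_low a b u v : lowz a u -> lowz b v ->
  lowz (hmul a b) (u + v) /\ hmul a b (u + v) = a u * b v.
Proof.
move=> la lb; split.
  move=> x xlt; rewrite /hmul fsbig1 // => i [ai bi].
  have ui : u <= i by rewrite leNgt; apply/negP => /la /eqP; apply/negP.
  have vi : v <= x - i by rewrite leNgt; apply/negP => /lb /eqP; apply/negP; rewrite -RminusE.
  exfalso; rn; lra.
rewrite /hmul (fsbig_widen _ [set u]) ?fsbig_set1; first by rewrite RminusE addrC addKr.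
  move=> i [ai bi].
  have ui : u <= i by rewrite leNgt; apply/negP => /la /eqP; apply/negP.
  have vi : v <= u + v - i by rewrite leNgt; apply/negP => /lb /eqP; apply/negP; rewrite -RminusE.
  rewrite /= ; rn; lra.
move=> i [/= -> nP] /=; rewrite RminusE addrC addKr.
case: (eqVneq (a u) 0) => [->|au]; first by rewrite mul0r.
case: (eqVneq (b v) 0) => [->|bv]; first by rewrite mulr0.
by exfalso; apply: nP; split => //; rewrite RminusE addrC addKr.
Qed.

Lemma hone_low : lowz hone 0 /\ hone 0 = 1.
Proof.
split; last by rewrite /hone eqxx.
by move=> x xlt; rewrite /hone; case: eqP => // x0; move: xlt; rewrite x0 R0E ltxx.
Qed.

Lemma prod_low (I : Type) (r : seq I) (F : I -> series) (d : I -> RR) :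
  (forall i, lowz (F i) (d i)) ->
  lowz (\big[hmul/hone]_(i <- r) F i) (\sum_(i <- r) d i) /\
  (\big[hmul/hone]_(i <- r) F i) (\sum_(i <- r) d i) = \prod_(i <- r) F i (d i).
Proof.
move=> Fl; elim: r => [|i r [IHl IHv]].
  by rewrite !big_nil; exact: hone_low.
rewrite !big_cons; have [l v] := hmul_low (Fl i) IHl.
by split => //; rewrite v IHv.
Qed.

Lemma hsum_eval (I : Type) (r : seq I) (P : pred I) (G : I -> series) x :
  (\big[hadd/hzero]_(i <- r | P i) G i) x = \sum_(i <- r | P i) G i x.
Proof.
elim: r => [|i r IH]; first by rewrite !big_nil.
by rewrite !big_cons; case: (P i) => //; rewrite /hadd IH.
Qed.

Definition phi (p : MA) : series := fun x => p@_x.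

Lemma phiD (p q : MA) : phi (p + q) = hadd (phi p) (phi q).
Proof. by apply: funext => x; rewrite /phi /hadd mcoeffD. Qed.
Lemma phiN (p : MA) : phi (- p) = hopp (phi p).
Proof. by apply: funext => x; rewrite /phi /hopp mcoeffN. Qed.
Lemma phi0 : phi 0 = hzero.
Proof. by apply: funext => x; rewrite /phi /hzero mcoeff0. Qed.
Lemma phi1 : phi 1 = hone.
Proof.
apply: funext => x; rewrite /phi /hone.
have -> : (1 : MA) = << (0 : RR) >> by [].
by rewrite mcoeffU eq_sym R0E; case: eqP.
Qed.

Lemma mulMA (p q : MA) : p * q = mamul p q. Proof. by []. Qed.

Lemma big_morph_mcoeff (I : Type) (r : seq I) (F : I -> malg RR CC) (y : RR) :
  (\sum_(i <- r) F i)@_y = \sum_(i <- r) (F i)@_y.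
Proof. exact: (big_morph (mcoeff y) (@mcoeffD RR CC y) (@mcoeff0 RR CC y)). Qed.

Lemma coefM (p q : MA) (x : RR) : (p * q)@_x = \sum_(k1 <- msupp p) p@_k1 * q@_(x - k1).
Proof.
have cs := big_morph (mcoeff x) (@mcoeffD RR CC x) (@mcoeff0 RR CC x).
rewrite mulMA /mamul cs; apply: eq_bigr => k1 _.
have -> : q@_(x - k1) = \sum_(k2 <- msupp q) q@_k2 *+ (k2 == x - k1).
  by rewrite {1}(monalgE q) big_morph_mcoeff; apply: eq_bigr => k2 _; rewrite mcoeffU.
rewrite cs mulr_sumr; apply: eq_bigr => k2 _.
rewrite !mcoeffU; have -> : (k1 + k2 == x) = (k2 == x - k1) by rewrite [RHS]eq_sym subr_eq [k2 + k1]addrC eq_sym.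
by rewrite mulrnAr.
Qed.

Lemma phiM (p q : MA) : phi (p * q) = hmul (phi p) (phi q).
Proof.
apply: funext => x; rewrite /phi /hmul coefM.
rewrite (fsbig_fwiden (msupp p)) //.
- by move=> i [/= + _]; rewrite mcoeff_neq0.
- by move=> i /= [/= ip nP]; rewrite /= ; case: (eqVneq (p@_i) 0) => [->|pi]; [rewrite mul0r|
    case: (eqVneq (q@_(Rminus x i)) 0) => [->|qi]; [rewrite mulr0| exfalso; exact: nP]].
Qed.


Lemma minor_phi n k (P : 'I_n -> 'I_n -> MA) (f g : 'I_k -> 'I_n) :
  minor (fun i j => phi (P i j)) f g = phi (\det (\matrix_(i, j) P (f i) (g j))).
Proof.
rewrite /minor /determinant (big_morph phi phiD phi0); apply: eq_bigr => s _.
have E : \big[hmul/hone]_(i < k) phi (P (f i) (g (s i))) =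
          phi (\prod_i (\matrix_(i, j) P (f i) (g j)) i (s i)).
  rewrite (big_morph phi phiM phi1); apply: eq_bigr => i _; by rewrite mxE.
by rewrite E; case: (odd_perm s); rewrite /= ?expr1 ?expr0 ?mulN1r ?mul1r ?phiN.
Qed.

Lemma det_mul_small (R : comNzRingType) m r (F : 'M[R]_(m + r.+1, m)) (G : 'M[R]_(m, m + r.+1)) :
  \det (F *m G) = 0.
Proof.
have -> : F *m G = row_mx F (0 : 'M[R]_(m + r.+1, r.+1)) *m col_mx G 0.
  by rewrite mul_row_col mul0mx addr0.
rewrite det_mulmx (expand_det_col _ (rshift m (@ord0 r))) big1 ?mul0r // => i _.
by rewrite row_mxEr mxE mul0r.
Qed.

Lemma submx_mul (R : pzRingType) n k m (F : 'M[R]_(n, m)) (G : 'M[R]_(m, n)) (f g : 'I_k -> 'I_n) :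
  \matrix_(i, j) (F *m G) (f i) (g j) =
  (\matrix_(i, l) F (f i) l) *m (\matrix_(l, j) G l (g j)).
Proof. by apply/matrixP => i j; rewrite !mxE; apply: eq_bigr => l _; rewrite !mxE. Qed.

Definition lterm n k (L : 'I_n -> 'I_n -> series) (A : 'M[RR]_n) (f g : 'I_k -> 'I_n) (s : 'S_k) : CC :=
  (-1) ^+ s * \prod_(i < k) L (f i) (g (s i)) (A (f i) (g (s i))).

Lemma deg_low a d : has_deg a d -> lowz a d.
Proof. by move=> [_ h] x /RltP; apply: h. Qed.

Lemma lead_nonzero n k (A : 'M[RR]_n) (L : 'I_n -> 'I_n -> series) (f g : 'I_k -> 'I_n) (s1 : 'S_k) :
  (forall i j, has_deg (L i j) (A i j)) ->
  (forall s, trop_value A f g s1 <= trop_value A f g s) ->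
  (forall s, trop_value A f g s = trop_value A f g s1 -> lterm L A f g s = lterm L A f g s1) ->
  minor L f g <> hzero.
Proof.
move=> Ldeg smin sterm mz.
set m := trop_value A f g s1.
have := congr1 (fun a : series => a m) mz; rewrite /hzero /minor hsum_eval.
have -> : \sum_(s : 'S_k) ((if odd_perm s then hopp else id)
              (\big[hmul/hone]_(i < k) L (f i) (g (s i)))) m
        = \sum_(s : 'S_k) (if trop_value A f g s == m then lterm L A f g s1 else 0).
  apply: eq_bigr => s _.
  have [pl pv] := @prod_low _ (index_enum 'I_k) (fun i => L (f i) (g (s i)))
     (fun i => A (f i) (g (s i))) (fun i => deg_low (Ldeg _ _)).
  have ev : ((if odd_perm s then hopp else id)
              (\big[hmul/hone]_(i < k) L (f i) (g (s i)))) m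
           = (-1) ^+ s * (\big[hmul/hone]_(i < k) L (f i) (g (s i))) m.
    by case: (odd_perm s); rewrite /= ?expr1 ?expr0 ?mulN1r ?mul1r.
  rewrite ev; case: eqP => [vm|vm].
    rewrite -(sterm s vm) /lterm; congr (_ * _); rewrite -vm.
    by rewrite /trop_value pv.
  rewrite pl ?mulr0 //; have := smin s; rewrite -/m le_eqVlt => /orP [/eqP vm'|//].
  by exfalso; apply: vm; rewrite vm'.
rewrite -big_mkcond /= sumr_const => /eqP; rewrite mulrn_eq0 => /orP [c0|].
  move: c0; apply/negP; rewrite -lt0n; apply/card_gt0P; exists s1.
  by rewrite unfold_in /=; apply/eqP.
rewrite /lterm mulf_eq0 signr_eq0 /= prodf_seq_eq0 => /hasP [i _ /=].
by have [h _] := Ldeg (f i) (g (s1 i)); rewrite (negbTE h).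
Qed.


Definition o0 : 'I_3 := @Ordinal 3 0 isT.
Definition o1 : 'I_3 := @Ordinal 3 1 isT.
Definition o2 : 'I_3 := @Ordinal 3 2 isT.

Lemma ord3P (i : 'I_3) : i = o0 \/ i = o1 \/ i = o2.
Proof.
case: i => [[|[|[|m]]] h]; [left|right;left|right;right|by []]; exact: val_inj.
Qed.

Lemma o01 : (o0 == o1) = false. Proof. by []. Qed.
Lemma o02 : (o0 == o2) = false. Proof. by []. Qed.
Lemma o12 : (o1 == o2) = false. Proof. by []. Qed.
Lemma o10 : (o1 == o0) = false. Proof. by []. Qed.
Lemma o20 : (o2 == o0) = false. Proof. by []. Qed.
Lemma o21 : (o2 == o1) = false. Proof. by []. Qed.
Definition oE := (o01, o02, o12, o10, o20, o21, eqxx).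

Lemma perm3_cases (s : 'S_3) :
  (s o0 = o0 /\ s o1 = o1 /\ s o2 = o2) \/
  (s o0 = o0 /\ s o1 = o2 /\ s o2 = o1) \/
  (s o0 = o2 /\ s o1 = o1 /\ s o2 = o0) \/
  (s o0 = o1 /\ s o1 = o0 /\ s o2 = o2) \/
  (s o0 = o1 /\ s o1 = o2 /\ s o2 = o0) \/
  (s o0 = o2 /\ s o1 = o0 /\ s o2 = o1).
Proof.
have d01 : s o0 != s o1 by rewrite (inj_eq perm_inj).
have d02 : s o0 != s o2 by rewrite (inj_eq perm_inj).
have d12 : s o1 != s o2 by rewrite (inj_eq perm_inj).
case: (ord3P (s o0)) => [a|[a|a]]; case: (ord3P (s o1)) => [b|[b|b]];
  case: (ord3P (s o2)) => [c|[c|c]]; rewrite ?a ?b ?c in d01 d02 d12;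
  rewrite ?oE in d01 d02 d12; try done; tauto.
Qed.

Lemma sum3 (F : 'I_3 -> RR) : \sum_(i < 3) F i = F o0 + F o1 + F o2.
Proof.
rewrite !big_ord_recr big_ord0 /=.
have -> : (widen_ord (leqnSn 2) (widen_ord (leqnSn 1) ord_max)) = o0 by apply: val_inj.
have -> : (widen_ord (leqnSn 2) ord_max) = o1 by apply: val_inj.
have -> : (@ord_max 2) = o2 by apply: val_inj.
ring.
Qed.

Lemma prod3 (F : 'I_3 -> CC) : \prod_(i < 3) F i = F o0 * F o1 * F o2.
Proof.
rewrite !big_ord_recr big_ord0 /=.
have -> : (widen_ord (leqnSn 2) (widen_ord (leqnSn 1) ord_max)) = o0 by apply: val_inj.
have -> : (widen_ord (leqnSn 2) ord_max) = o1 by apply: val_inj.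
have -> : (@ord_max 2) = o2 by apply: val_inj.
ring.
Qed.

Lemma tv3 (A : 'M[RR]_3) (s : 'S_3) :
  trop_value A id id s = A o0 (s o0) + A o1 (s o1) + A o2 (s o2).
Proof. by rewrite /trop_value sum3. Qed.

Lemma card_cls (T : finType) (P : pred T) : #|[set i | P i]%classic| = #|[set i | P i]%SET|.
Proof.
apply: eq_card => i; rewrite finset.in_set; apply/idP/idP => [/set_mem //|h]; exact: mem_set.
Qed.

Lemma mono_fix (s : 'S_3) p : sym_monomial id id s p p = (s p == p).
Proof.
rewrite /sym_monomial card_cls.
have -> : [set i | ((id i == p) && (id (s i) == p)) || ((id i == p) && (id (s i) == p))]%SET
        = if s p == p then [set p]%SET else finset.set0.
  apply/setP => i; rewrite !finset.in_set /= orbb.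
  case: eqP => [->|ip]; first by case: (s p == p); rewrite ?finset.in_set1 ?finset.in_set0 ?eqxx.
  by case: (s p == p); rewrite ?finset.in_set1 ?finset.in_set0 // (introF eqP ip).
by case: (s p == p); rewrite ?cards1 ?cards0.
Qed.

Lemma mono_inv n (s : 'S_n) p q : sym_monomial id id s^-1 p q = sym_monomial id id s p q.
Proof.
rewrite /sym_monomial !card_cls.
rewrite -(card_preimset _ (@perm_inj _ s)).
apply: eq_card => j; rewrite !finset.in_set /= permK.
by rewrite orbC [(j == q) && _]andbC [(j == p) && _]andbC.
Qed.

Lemma inv_of (s s1 : 'S_3) : (forall i, s1 (s i) = i) -> s = (s1^-1)%g.
Proof. by move=> h; apply/permP => i; rewrite -[in RHS](h i) permK. Qed.

Ltac cases3 s a0 a1 a2 :=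
  case: (perm3_cases s) => [[a0 [a1 a2]]|[[a0 [a1 a2]]|[[a0 [a1 a2]]|[[a0 [a1 a2]]|[[a0 [a1 a2]]|[a0 [a1 a2]]]]]]].

Lemma same_mono3 (s s1 : 'S_3) :
  (forall p q, sym_monomial id id s p q = sym_monomial id id s1 p q) -> s = s1 \/ s = (s1^-1)%g.
Proof.
move=> H.
have F p : (s p == p) = (s1 p == p).
  by have := H p p; rewrite !mono_fix; case: (s p == p); case: (s1 p == p).
have f0 := F o0; have f1 := F o1; have f2 := F o2.
cases3 s a0 a1 a2; cases3 s1 b0 b1 b2; rewrite ?a0 ?a1 ?a2 ?b0 ?b1 ?b2 ?oE in f0 f1 f2;
  try discriminate;
  first [ left; apply/permP => i; case: (ord3P i) => [->|[->|->]]; by rewrite ?a0 ?a1 ?a2 ?b0 ?b1 ?b2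
        | right; apply: inv_of => i; case: (ord3P i) => [->|[->|->]]; by rewrite ?a0 ?a1 ?a2 ?b0 ?b1 ?b2 ].
Qed.

Lemma lterm_inv (L : 'I_3 -> 'I_3 -> series) (A : 'M[RR]_3) (s : 'S_3) :
  (forall i j, L i j = L j i) -> (forall i j, A i j = A j i) ->
  lterm L A id id s^-1 = lterm L A id id s.
Proof.
move=> LS AS; rewrite /lterm odd_permV; congr (_ * _).
rewrite (reindex_inj (@perm_inj _ s)) /=; apply: eq_bigr => i _.
by rewrite permK LS AS.
Qed.


Definition mono (r : RR) : MA := << r >>.
Arguments mono r%_ring_scope.

Lemma mono_mul (a b : RR) : mono a * mono b = mono (a + b).
Proof. by rewrite mulMA /mono mmulUU mulr1. Qed.

Lemma mono0 : mono 0 = 1.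
Proof. by []. Qed.

Definition sm (l : seq (int * RR)) : MA := \sum_(q <- l) mono q.2 *~ q.1.

Lemma coef_sm l x : (sm l)@_x = ((\sum_(q <- l) q.1 * (q.2 == x)%:Z)%:~R : CC).
Proof.
elim: l => [|q l IH]; first by rewrite /sm !big_nil mcoeff0.
rewrite /sm !big_cons mcoeffD -/(sm l) IH rmorphD /=; congr (_ + _).
have -> : (mono q.2 *~ q.1)@_x = (mono q.2)@_x *~ q.1 by exact: raddfMz.
rewrite /mono mcoeffU intrM -mulrzl mulrC.
by case: (q.2 == x); rewrite ?mul1r ?mul0r /=.
Qed.

Lemma has_deg_phi (p : MA) (d : RR) : p@_d != 0 -> (forall x, x < d -> p@_x = 0) ->
  has_deg (phi p) d.
Proof. by move=> h1 h2; split => // x /RltP; apply: h2. Qed.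

Lemma intr_neq0 (z : int) : z != 0 -> (z%:~R : CC) != 0.
Proof. by rewrite intr_eq0. Qed.

Lemma eqT_R (r x : RR) : r = x -> (r == x) = true. Proof. by move=> ->; rewrite eqxx. Qed.
Lemma eqF_R (r x : RR) : r <> x -> (r == x) = false. Proof. by move/eqP/negbTE. Qed.

Ltac dec_eqs := repeat match goal with
  | |- context [ @eq_op Rstruct.RbaseSymbolsImpl_R__canonical__eqtype_Equality ?r ?x ] =>
      first [ rewrite (@eqT_R r x); last by lra
            | rewrite (@eqF_R r x); last by move=> ?; lra ]
  end.

Definition mn (a b : RR) := if a <= b then a else b.

Lemma hahn_phi (p : MA) : is_hahn (phi p).
Proof.
move=> S Ssub [x0 Sx0].
pose l := [seq y <- msupp p | `[< S y >]].
have lS : forall y, y \in l -> S y.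
  by move=> y; rewrite mem_filter => /andP [/asboolP h _].
have Sl : forall y, S y -> y \in l.
  move=> y Sy; rewrite mem_filter; apply/andP; split; first by apply/asboolP.
  by rewrite -mcoeff_neq0; apply: Ssub.
pose m := foldr mn x0 l.
have mS : S m.
  rewrite /m; elim: l lS {Sl m} => [|y l' IH] h //=.
  rewrite /mn; case: ifP => _; first by apply: h; rewrite inE eqxx.
  by apply: IH => z zl; apply: h; rewrite inE zl orbT.
have mle : forall y, y \in x0 :: l -> m <= y.
  rewrite /m; elim: l {lS Sl m mS} => [|y l' IH] z /=; first by rewrite inE => /eqP ->.
  have mnl : mn y (foldr mn x0 l') <= y by rewrite /mn; case: ifP => // /negbT; rewrite -ltNge => /ltW.
  have mnr : mn y (foldr mn x0 l') <= foldr mn x0 l' by rewrite /mn; case: ifP.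
  rewrite !inE => /orP [/eqP ->|/orP [/eqP ->|zl]] //.
    by apply: le_trans mnr _; apply: IH; rewrite inE eqxx.
  by apply: le_trans mnr _; apply: IH; rewrite inE zl orbT.
exists m; split => // x Sx; apply/RleP; apply: mle; rewrite inE Sl ?orbT //.
Qed.

Definition good_lift (A : 'M[RR]_3) :=
  exists L, sym_lift A L /\ forall f g : 'I_3 -> 'I_3, minor L f g = hzero.

Lemma good_from_fact (A : 'M[RR]_3) (E : 'I_3 -> 'I_3 -> MA)
    (F : 'M[MA]_(3, 2)) (G : 'M[MA]_(2, 3)) :
  (forall i j, E i j = (F *m G) i j) -> (forall i j, E i j = E j i) ->
  (forall i j, has_deg (phi (E i j)) (A i j)) -> good_lift A.
Proof.
move=> EFG Esym Edeg; exists (fun i j => phi (E i j)); split.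
  split; first by move=> i j; rewrite Esym.
  split; first by move=> i j; apply: hahn_phi.
  split => // i j h; have [nz _] := Edeg i j.
  by move: nz; rewrite h /hzero eqxx.
move=> f g; rewrite minor_phi.
have -> : \matrix_(i, j) E (f i) (g j) = \matrix_(i, j) (F *m G) (f i) (g j).
  by apply/matrixP => i j; rewrite mxE EFG !mxE.
by rewrite submx_mul (@det_mul_small _ 2 0) phi0.
Qed.


Definition f3 (T : Type) (x0 x1 x2 : T) (i : 'I_3) : T :=
  match val i with 0 => x0 | 1 => x1 | _ => x2 end.
Definition f2 (T : Type) (x0 x1 : T) (i : 'I_2) : T :=
  match val i with 0 => x0 | _ => x1 end.
Definition sym3 (T : Type) (a00 a01 a02 a11 a12 a22 : T) (i j : 'I_3) : T :=
  f3 (f3 a00 a01 a02 j) (f3 a01 a11 a12 j) (f3 a02 a12 a22 j) i.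

Lemma sym3_sym T (a00 a01 a02 a11 a12 a22 : T) i j :
  sym3 a00 a01 a02 a11 a12 a22 i j = sym3 a00 a01 a02 a11 a12 a22 j i.
Proof. by case: (ord3P i) => [->|[->|->]]; case: (ord3P j) => [->|[->|->]]. Qed.

Lemma sum2 (R : nmodType) (F : 'I_2 -> R) : \sum_(k < 2) F k = F ord0 + F (lift ord0 ord0).
Proof. by rewrite !big_ord_recl big_ord0 addr0. Qed.

Ltac degsolve := apply: has_deg_phi; [ idtac | move=> x hx ];
  rewrite ?coef_sm /= ?big_cons ?big_nil /=; dec_eqs; first [by rewrite intr_eq0 | by [] ].

Ltac splitle H := move: (H); rewrite le_eqVlt => /orP [/eqP ? | ?].

Lemma expand_tac_test (g0 e2 : RR) : True.
Proof. by []. Qed.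

Lemma caseDT0 (A : 'M[RR]_3) : (forall i j, A i j = A j i) ->
  A o1 o2 - A o1 o1 / 2 - A o2 o2 / 2 = 0 ->
  0 <= A o0 o2 - A o0 o0 / 2 - A o2 o2 / 2 ->
  0 <= A o0 o1 - A o0 o0 / 2 - A o1 o1 / 2 -> good_lift A.
Proof.
move=> hsym H0 H1 H2.
pose g0 := A o0 o0 / 2; have hg0 : g0 = A o0 o0 / 2 by []; clearbody g0.
pose g1 := A o1 o1 / 2; have hg1 : g1 = A o1 o1 / 2 by []; clearbody g1.
pose g2 := A o2 o2 / 2; have hg2 : g2 = A o2 o2 / 2 by []; clearbody g2.
pose e1 := A o0 o2 - g0 - g2; have he1 : e1 = A o0 o2 - g0 - g2 by []; clearbody e1.
pose e2 := A o0 o1 - g0 - g1; have he2 : e2 = A o0 o1 - g0 - g1 by []; clearbody e2.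
have s01 := hsym o0 o1; have s02 := hsym o0 o2; have s12 := hsym o1 o2.
pose u := mono e1; pose v := mono e2.
pose w0 := mono g0; pose w1 := mono g1; pose w2 := mono g2.
pose E := sym3 (w0 * w0 * (v * v + 1)) (w0 * w1 * v) (w0 * w2 * u) (w1 * w1) (w1 * w2)
               (w2 * w2 * (1 + (u - v) * (u - v))).
pose F : 'M[MA]_(3, 2) := \matrix_(i, k) f3 (f2 (w0 * v) w0 k) (f2 w1 0 k) (f2 w2 (w2 * (u - v)) k) i.
apply: (@good_from_fact A E F F^T).
- move=> i j; rewrite !mxE sum2 !mxE.
  by case: (ord3P i) => [->|[->|->]]; case: (ord3P j) => [->|[->|->]]; rewrite /E /sym3 /f3 /f2 /=; ring.
- by move=> i j; rewrite /E sym3_sym.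
have d00 : has_deg (phi (w0 * w0 * (v * v + 1))) (A o0 o0).
  rewrite (_ : _ * _ = sm [:: (1, g0 + g0 + e2 + e2); (1, g0 + g0)]); last first.
    by rewrite /sm !big_cons big_nil /w0 /v -!mono_mul /=; ring.
  splitle H2; degsolve.
have d01 : has_deg (phi (w0 * w1 * v)) (A o0 o1).
  rewrite (_ : _ * _ = sm [:: (1, g0 + g1 + e2)]); last first.
    by rewrite /sm !big_cons big_nil /w0 /w1 /v -!mono_mul /=; ring.
  degsolve.
have d02 : has_deg (phi (w0 * w2 * u)) (A o0 o2).
  rewrite (_ : _ * _ = sm [:: (1, g0 + g2 + e1)]); last first.
    by rewrite /sm !big_cons big_nil /w0 /w2 /u -!mono_mul /=; ring.
  degsolve.
have d11 : has_deg (phi (w1 * w1)) (A o1 o1).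
  rewrite (_ : _ * _ = sm [:: (1, g1 + g1)]); last first.
    by rewrite /sm !big_cons big_nil /w1 -!mono_mul /=; ring.
  degsolve.
have d12 : has_deg (phi (w1 * w2)) (A o1 o2).
  rewrite (_ : _ * _ = sm [:: (1, g1 + g2)]); last first.
    by rewrite /sm !big_cons big_nil /w1 /w2 -!mono_mul /=; ring.
  degsolve.
have d22 : has_deg (phi (w2 * w2 * (1 + (u - v) * (u - v)))) (A o2 o2).
  rewrite (_ : _ * _ = sm [:: (1, g2 + g2); (1, g2 + g2 + e1 + e1); (-2, g2 + g2 + e1 + e2);
                             (1, g2 + g2 + e2 + e2)]); last first.
    by rewrite /sm !big_cons big_nil /w2 /u /v -!mono_mul /=; ring.
  splitle H1; splitle H2; degsolve.
move=> i j; case: (ord3P i) => [->|[->|->]]; case: (ord3P j) => [->|[->|->]];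
  rewrite /E /sym3 /f3 /= -?s01 -?s02 -?s12 //.
Qed.

Lemma rel_eq (x y r K : MA) : r = 1 -> x - y = (r - 1) * K -> x = y.
Proof. by move=> -> h; apply/eqP; rewrite -subr_eq0 h subrr mul0r. Qed.

Lemma caseT0T1 (A : 'M[RR]_3) : (forall i j, A i j = A j i) ->
  A o1 o2 - A o1 o1 / 2 - A o2 o2 / 2 = A o0 o2 - A o0 o0 / 2 - A o2 o2 / 2 ->
  A o1 o2 - A o1 o1 / 2 - A o2 o2 / 2 <= 0 ->
  0 <= A o0 o1 - A o0 o0 / 2 - A o1 o1 / 2 -> good_lift A.
Proof.
move=> hsym H01 H0 H2.
move: (H0); rewrite le_eqVlt => /orP [/eqP H0z|H0n].
  apply: caseDT0 => //; lra.
pose g0 := A o0 o0 / 2; have hg0 : g0 = A o0 o0 / 2 by []; clearbody g0.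
pose g1 := A o1 o1 / 2; have hg1 : g1 = A o1 o1 / 2 by []; clearbody g1.
pose g2 := A o2 o2 / 2; have hg2 : g2 = A o2 o2 / 2 by []; clearbody g2.
pose e := A o1 o2 - g1 - g2; have he : e = A o1 o2 - g1 - g2 by []; clearbody e.
pose e2 := A o0 o1 - g0 - g1; have he2 : e2 = A o0 o1 - g0 - g1 by []; clearbody e2.
have s01 := hsym o0 o1; have s02 := hsym o0 o2; have s12 := hsym o1 o2.
pose a := mono e; pose b := mono (- e); pose c := mono e2.
pose w0 := mono g0; pose w1 := mono g1; pose w2 := mono g2.
have ab1 : a * b = 1 by rewrite /a /b mono_mul subrr mono0.
pose bt := c * b - b.
pose E := sym3 (w0 * w0) (w0 * w1 * c) (w0 * w2 * a)
   (w1 * w1 * (-1 + 2 * c + b * b - 2 * c * b * b + c * c * b * b))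
   (w1 * w2 * (a - b + c * b)) (w2 * w2).
pose F : 'M[MA]_(3, 2) := \matrix_(i, k) f3 (f2 w0 0 k) (f2 w1 (w1 * bt) k) (f2 0 w2 k) i.
pose G : 'M[MA]_(2, 3) := \matrix_(k, j)
   f2 (f3 w0 ((1 + a * bt) * w1) (a * w2) j) (f3 (a * w0) ((a + bt) * w1) w2 j) k.
apply: (@good_from_fact A E F G).
- move=> i j; rewrite !mxE sum2 !mxE.
  case: (ord3P i) => [->|[->|->]]; case: (ord3P j) => [->|[->|->]]; rewrite /E /sym3 /f3 /f2 /bt /=;
  first [ ring
        | apply: (@rel_eq _ _ (a * b) ((1 - c) * w0 * w1)) => //; ring
        | apply: (@rel_eq _ _ (a * b) ((2 - 2 * c) * w1 * w1)) => //; ring ].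
- by move=> i j; rewrite /E sym3_sym.
have d00 : has_deg (phi (w0 * w0)) (A o0 o0).
  rewrite (_ : _ * _ = sm [:: (1, g0 + g0)]); last first.
    by rewrite /sm !big_cons big_nil /w0 -!mono_mul /=; ring.
  degsolve.
have d01 : has_deg (phi (w0 * w1 * c)) (A o0 o1).
  rewrite (_ : _ * _ = sm [:: (1, g0 + g1 + e2)]); last first.
    by rewrite /sm !big_cons big_nil /w0 /w1 /c -!mono_mul /=; ring.
  degsolve.
have d02 : has_deg (phi (w0 * w2 * a)) (A o0 o2).
  rewrite (_ : _ * _ = sm [:: (1, g0 + g2 + e)]); last first.
    by rewrite /sm !big_cons big_nil /w0 /w2 /a -!mono_mul /=; ring.
  degsolve.
have d11 : has_deg (phi (w1 * w1 * (-1 + 2 * c + b * b - 2 * c * b * b + c * c * b * b))) (A o1 o1).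
  rewrite (_ : _ * _ = sm [:: (-1, g1 + g1); (2, g1 + g1 + e2); (1, g1 + g1 + - e + - e);
      (-2, g1 + g1 + e2 + - e + - e); (1, g1 + g1 + e2 + e2 + - e + - e)]); last first.
    by rewrite /sm !big_cons big_nil /w1 /b /c -!mono_mul /=; ring.
  splitle H2; degsolve.
have d12 : has_deg (phi (w1 * w2 * (a - b + c * b))) (A o1 o2).
  rewrite (_ : _ * _ = sm [:: (1, g1 + g2 + e); (-1, g1 + g2 + - e); (1, g1 + g2 + e2 + - e)]); last first.
    by rewrite /sm !big_cons big_nil /w1 /w2 /a /b /c -!mono_mul /=; ring.
  degsolve.
have d22 : has_deg (phi (w2 * w2)) (A o2 o2).
  rewrite (_ : _ * _ = sm [:: (1, g2 + g2)]); last first.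
    by rewrite /sm !big_cons big_nil /w2 -!mono_mul /=; ring.
  degsolve.
move=> i j; case: (ord3P i) => [->|[->|->]]; case: (ord3P j) => [->|[->|->]];
  rewrite /E /sym3 /f3 /= -?s01 -?s02 -?s12 //.
Qed.

Lemma caseT0C (A : 'M[RR]_3) : (forall i j, A i j = A j i) ->
  A o1 o2 - A o1 o1 / 2 - A o2 o2 / 2 =
    (A o0 o2 - A o0 o0 / 2 - A o2 o2 / 2) + (A o0 o1 - A o0 o0 / 2 - A o1 o1 / 2) ->
  A o0 o2 - A o0 o0 / 2 - A o2 o2 / 2 <= 0 ->
  A o0 o1 - A o0 o0 / 2 - A o1 o1 / 2 <= 0 -> good_lift A.
Proof.
move=> hsym H0 H1 H2.
pose g0 := A o0 o0 / 2; have hg0 : g0 = A o0 o0 / 2 by []; clearbody g0.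
pose g1 := A o1 o1 / 2; have hg1 : g1 = A o1 o1 / 2 by []; clearbody g1.
pose g2 := A o2 o2 / 2; have hg2 : g2 = A o2 o2 / 2 by []; clearbody g2.
pose e0 := A o1 o2 - g1 - g2; have he0 : e0 = A o1 o2 - g1 - g2 by []; clearbody e0.
pose e1 := A o0 o2 - g0 - g2; have he1 : e1 = A o0 o2 - g0 - g2 by []; clearbody e1.
pose e2 := A o0 o1 - g0 - g1; have he2 : e2 = A o0 o1 - g0 - g1 by []; clearbody e2.
have s01 := hsym o0 o1; have s02 := hsym o0 o2; have s12 := hsym o1 o2.
pose al := mono (- e2); pose be := mono (- e1); pose a := mono e0.
pose w0 := mono g0; pose w1 := mono g1; pose w2 := mono g2.
pose E := sym3 (w0 * w0 * (al * al + 2 * al * be * a + be * be)) (w0 * w1 * (al + be * a))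
   (w0 * w2 * (al * a + be)) (w1 * w1) (w1 * w2 * a) (w2 * w2).
pose F : 'M[MA]_(3, 2) := \matrix_(i, k) f3 (f2 (w0 * al) (w0 * be) k) (f2 w1 0 k) (f2 0 w2 k) i.
pose G : 'M[MA]_(2, 3) := \matrix_(k, j)
   f2 (f3 ((al + a * be) * w0) w1 (a * w2) j) (f3 ((a * al + be) * w0) (a * w1) w2 j) k.
apply: (@good_from_fact A E F G).
- move=> i j; rewrite !mxE sum2 !mxE.
  by case: (ord3P i) => [->|[->|->]]; case: (ord3P j) => [->|[->|->]]; rewrite /E /sym3 /f3 /f2 /=; ring.
- by move=> i j; rewrite /E sym3_sym.
have d00 : has_deg (phi (w0 * w0 * (al * al + 2 * al * be * a + be * be))) (A o0 o0).
  rewrite (_ : _ * _ = sm [:: (1, g0 + g0 + - e2 + - e2); (2, g0 + g0 + - e2 + - e1 + e0);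
                              (1, g0 + g0 + - e1 + - e1)]); last first.
    by rewrite /sm !big_cons big_nil /w0 /al /be /a -!mono_mul /=; ring.
  splitle H1; splitle H2; degsolve.
have d01 : has_deg (phi (w0 * w1 * (al + be * a))) (A o0 o1).
  rewrite (_ : _ * _ = sm [:: (1, g0 + g1 + - e2); (1, g0 + g1 + - e1 + e0)]); last first.
    by rewrite /sm !big_cons big_nil /w0 /w1 /al /be /a -!mono_mul /=; ring.
  splitle H2; degsolve.
have d02 : has_deg (phi (w0 * w2 * (al * a + be))) (A o0 o2).
  rewrite (_ : _ * _ = sm [:: (1, g0 + g2 + - e2 + e0); (1, g0 + g2 + - e1)]); last first.
    by rewrite /sm !big_cons big_nil /w0 /w2 /al /be /a -!mono_mul /=; ring.
  splitle H1; degsolve.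
have d11 : has_deg (phi (w1 * w1)) (A o1 o1).
  rewrite (_ : _ * _ = sm [:: (1, g1 + g1)]); last first.
    by rewrite /sm !big_cons big_nil /w1 -!mono_mul /=; ring.
  degsolve.
have d12 : has_deg (phi (w1 * w2 * a)) (A o1 o2).
  rewrite (_ : _ * _ = sm [:: (1, g1 + g2 + e0)]); last first.
    by rewrite /sm !big_cons big_nil /w1 /w2 /a -!mono_mul /=; ring.
  degsolve.
have d22 : has_deg (phi (w2 * w2)) (A o2 o2).
  rewrite (_ : _ * _ = sm [:: (1, g2 + g2)]); last first.
    by rewrite /sm !big_cons big_nil /w2 -!mono_mul /=; ring.
  degsolve.
move=> i j; case: (ord3P i) => [->|[->|->]]; case: (ord3P j) => [->|[->|->]];
  rewrite /E /sym3 /f3 /= -?s01 -?s02 -?s12 //.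
Qed.


Lemma good_perm (A : 'M[RR]_3) (sg : 'S_3) :
  good_lift (\matrix_(i, j) A (sg i) (sg j)) -> good_lift A.
Proof.
move=> [L [[Ls [Lh [Lnz Ldeg]]] Lm]].
exists (fun i j => L (sg^-1 i) (sg^-1 j))%g; split; last by move=> f g; exact: (Lm (fun i => sg^-1 (f i))%g (fun i => sg^-1 (g i))%g).
split; first by move=> i j /=; rewrite Ls.
split; first by move=> i j /=; apply: Lh.
split; first by move=> i j /=; apply: Lnz.
by move=> i j; have := Ldeg (sg^-1 i)%g (sg^-1 j)%g; rewrite mxE !permKV.
Qed.

Definition t01 : 'S_3 := tperm o0 o1.
Definition t02 : 'S_3 := tperm o0 o2.
Definition t12 : 'S_3 := tperm o1 o2.
Lemma t01E : (t01 o0 = o1) * (t01 o1 = o0) * (t01 o2 = o2).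
Proof. by rewrite /t01 tpermL tpermR tpermD. Qed.
Lemma t02E : (t02 o0 = o2) * (t02 o1 = o1) * (t02 o2 = o0).
Proof. by rewrite /t02 tpermL tpermR tpermD. Qed.
Lemma t12E : (t12 o0 = o0) * (t12 o1 = o2) * (t12 o2 = o1).
Proof. by rewrite /t12 tpermL tpermR tpermD. Qed.

Lemma perm_sym (A : 'M[RR]_3) (sg : 'S_3) : (forall i j, A i j = A j i) ->
  forall i j, (\matrix_(i, j) A (sg i) (sg j)) i j = (\matrix_(i, j) A (sg i) (sg j)) j i.
Proof. by move=> hs i j; rewrite !mxE hs. Qed.

Definition VD (A : 'M[RR]_3) := A o0 o0 + A o1 o1 + A o2 o2.
Definition VT0 (A : 'M[RR]_3) := A o0 o0 + A o1 o2 + A o2 o1.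
Definition VT1 (A : 'M[RR]_3) := A o1 o1 + A o0 o2 + A o2 o0.
Definition VT2 (A : 'M[RR]_3) := A o2 o2 + A o0 o1 + A o1 o0.
Definition VC (A : 'M[RR]_3) := A o0 o1 + A o1 o2 + A o2 o0.

Ltac symfacts A hsym :=
  have := hsym o0 o1; have := hsym o0 o2; have := hsym o1 o2; move=> ? ? ?.

Lemma pDT0 (A : 'M[RR]_3) : (forall i j, A i j = A j i) ->
  VD A = VT0 A -> VD A <= VT1 A -> VD A <= VT2 A -> good_lift A.
Proof.
rewrite /VD /VT0 /VT1 /VT2 => hs h1 h2 h3; symfacts A hs; apply: caseDT0 => //; lra.
Qed.
Lemma pT0T1 (A : 'M[RR]_3) : (forall i j, A i j = A j i) ->
  VT0 A = VT1 A -> VT0 A <= VD A -> VT0 A <= VC A -> good_lift A.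
Proof.
rewrite /VD /VT0 /VT1 /VC => hs h1 h2 h3; symfacts A hs; apply: caseT0T1 => //; lra.
Qed.
Lemma pT0C (A : 'M[RR]_3) : (forall i j, A i j = A j i) ->
  VT0 A = VC A -> VT0 A <= VT1 A -> VT0 A <= VT2 A -> good_lift A.
Proof.
rewrite /VT0 /VT1 /VT2 /VC => hs h1 h2 h3; symfacts A hs; apply: caseT0C => //; lra.
Qed.


Lemma pDT1 (A : 'M[RR]_3) : (forall i j, A i j = A j i) ->
  VD A = VT1 A -> VD A <= VT0 A -> VD A <= VT2 A -> good_lift A.
Proof.
move=> hs h1 h2 h3; apply: (good_perm (sg := t01)); apply: pDT0; first exact: perm_sym.
all: move: h1 h2 h3; rewrite /VD /VT0 /VT1 /VT2 /VC !mxE ?t01E; symfacts A hs; lra.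
Qed.
Lemma pDT2 (A : 'M[RR]_3) : (forall i j, A i j = A j i) ->
  VD A = VT2 A -> VD A <= VT0 A -> VD A <= VT1 A -> good_lift A.
Proof.
move=> hs h1 h2 h3; apply: (good_perm (sg := t02)); apply: pDT0; first exact: perm_sym.
all: move: h1 h2 h3; rewrite /VD /VT0 /VT1 /VT2 /VC !mxE ?t02E; symfacts A hs; lra.
Qed.
Lemma pT0T2 (A : 'M[RR]_3) : (forall i j, A i j = A j i) ->
  VT0 A = VT2 A -> VT0 A <= VD A -> VT0 A <= VC A -> good_lift A.
Proof.
move=> hs h1 h2 h3; apply: (good_perm (sg := t12)); apply: pT0T1; first exact: perm_sym.
all: move: h1 h2 h3; rewrite /VD /VT0 /VT1 /VT2 /VC !mxE ?t12E; symfacts A hs; lra.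
Qed.
Lemma pT1T2 (A : 'M[RR]_3) : (forall i j, A i j = A j i) ->
  VT1 A = VT2 A -> VT1 A <= VD A -> VT1 A <= VC A -> good_lift A.
Proof.
move=> hs h1 h2 h3; apply: (good_perm (sg := t02)); apply: pT0T1; first exact: perm_sym.
all: move: h1 h2 h3; rewrite /VD /VT0 /VT1 /VT2 /VC !mxE ?t02E; symfacts A hs; lra.
Qed.
Lemma pT1C (A : 'M[RR]_3) : (forall i j, A i j = A j i) ->
  VT1 A = VC A -> VT1 A <= VT0 A -> VT1 A <= VT2 A -> good_lift A.
Proof.
move=> hs h1 h2 h3; apply: (good_perm (sg := t01)); apply: pT0C; first exact: perm_sym.
all: move: h1 h2 h3; rewrite /VD /VT0 /VT1 /VT2 /VC !mxE ?t01E; symfacts A hs; lra.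
Qed.
Lemma pT2C (A : 'M[RR]_3) : (forall i j, A i j = A j i) ->
  VT2 A = VC A -> VT2 A <= VT0 A -> VT2 A <= VT1 A -> good_lift A.
Proof.
move=> hs h1 h2 h3; apply: (good_perm (sg := t02)); apply: pT0C; first exact: perm_sym.
all: move: h1 h2 h3; rewrite /VD /VT0 /VT1 /VT2 /VC !mxE ?t02E; symfacts A hs; lra.
Qed.


Definition c3 : 'S_3 := (t01 * t02)%g.
Lemma c3E : (c3 o0 = o1) * (c3 o1 = o2) * (c3 o2 = o0).
Proof. by rewrite /c3 !permM !t01E !t02E. Qed.

Lemma sing_good (A : 'M[RR]_3) : (forall i j, A i j = A j i) ->
  sym_trop_singular A id id -> good_lift A.
Proof.
move=> hs [s1 [s2 [smin [seq [p [q mne]]]]]].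
have m1 := smin 1%g; have m2 := smin t12; have m3 := smin t02; have m4 := smin t01; have m5 := smin c3.
move: m1 m2 m3 m4 m5 => /RleP m1 /RleP m2 /RleP m3 /RleP m4 /RleP m5.
rewrite !tv3 ?perm1 ?t01E ?t02E ?t12E ?c3E in m1 m2 m3 m4 m5 seq.
symfacts A hs.
have same_s : forall s s' : 'S_3, s = s' -> sym_monomial id id s p q = sym_monomial id id s' p q.
  by move=> s s' ->.
have inv_s : forall s s' : 'S_3, s' = (s^-1)%g -> sym_monomial id id s p q = sym_monomial id id s' p q.
  by move=> s s' ->; rewrite mono_inv.
cases3 s1 a0 a1 a2; cases3 s2 b0 b1 b2.
all: [> (exfalso; apply: mne; apply: same_s; apply/permP => i; case: (ord3P i) => [->|[->|->]]; by rewrite ?a0 ?a1 ?a2 ?b0 ?b1 ?b2)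
  | (rewrite ?a0 ?a1 ?a2 ?b0 ?b1 ?b2 in m1 m2 m3 m4 m5 seq; apply: pDT0 => //; rewrite /VD /VT0 /VT1 /VT2 /VC; lra)
  | (rewrite ?a0 ?a1 ?a2 ?b0 ?b1 ?b2 in m1 m2 m3 m4 m5 seq; apply: pDT1 => //; rewrite /VD /VT0 /VT1 /VT2 /VC; lra)
  | (rewrite ?a0 ?a1 ?a2 ?b0 ?b1 ?b2 in m1 m2 m3 m4 m5 seq; apply: pDT2 => //; rewrite /VD /VT0 /VT1 /VT2 /VC; lra)
  | (rewrite ?a0 ?a1 ?a2 ?b0 ?b1 ?b2 in m1 m2 m3 m4 m5 seq; apply: pDT0 => //; rewrite /VD /VT0 /VT1 /VT2 /VC; lra)
  | (rewrite ?a0 ?a1 ?a2 ?b0 ?b1 ?b2 in m1 m2 m3 m4 m5 seq; apply: pDT0 => //; rewrite /VD /VT0 /VT1 /VT2 /VC; lra)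
  | (rewrite ?a0 ?a1 ?a2 ?b0 ?b1 ?b2 in m1 m2 m3 m4 m5 seq; apply: pDT0 => //; rewrite /VD /VT0 /VT1 /VT2 /VC; lra)
  | (exfalso; apply: mne; apply: same_s; apply/permP => i; case: (ord3P i) => [->|[->|->]]; by rewrite ?a0 ?a1 ?a2 ?b0 ?b1 ?b2)
  | (rewrite ?a0 ?a1 ?a2 ?b0 ?b1 ?b2 in m1 m2 m3 m4 m5 seq; apply: pT0T1 => //; rewrite /VD /VT0 /VT1 /VT2 /VC; lra)
  | (rewrite ?a0 ?a1 ?a2 ?b0 ?b1 ?b2 in m1 m2 m3 m4 m5 seq; apply: pT0T2 => //; rewrite /VD /VT0 /VT1 /VT2 /VC; lra)
  | (rewrite ?a0 ?a1 ?a2 ?b0 ?b1 ?b2 in m1 m2 m3 m4 m5 seq; apply: pT0C => //; rewrite /VD /VT0 /VT1 /VT2 /VC; lra)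
  | (rewrite ?a0 ?a1 ?a2 ?b0 ?b1 ?b2 in m1 m2 m3 m4 m5 seq; apply: pT0C => //; rewrite /VD /VT0 /VT1 /VT2 /VC; lra)
  | (rewrite ?a0 ?a1 ?a2 ?b0 ?b1 ?b2 in m1 m2 m3 m4 m5 seq; apply: pDT1 => //; rewrite /VD /VT0 /VT1 /VT2 /VC; lra)
  | (rewrite ?a0 ?a1 ?a2 ?b0 ?b1 ?b2 in m1 m2 m3 m4 m5 seq; apply: pT0T1 => //; rewrite /VD /VT0 /VT1 /VT2 /VC; lra)
  | (exfalso; apply: mne; apply: same_s; apply/permP => i; case: (ord3P i) => [->|[->|->]]; by rewrite ?a0 ?a1 ?a2 ?b0 ?b1 ?b2)
  | (rewrite ?a0 ?a1 ?a2 ?b0 ?b1 ?b2 in m1 m2 m3 m4 m5 seq; apply: pT1T2 => //; rewrite /VD /VT0 /VT1 /VT2 /VC; lra)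
  | (rewrite ?a0 ?a1 ?a2 ?b0 ?b1 ?b2 in m1 m2 m3 m4 m5 seq; apply: pT1C => //; rewrite /VD /VT0 /VT1 /VT2 /VC; lra)
  | (rewrite ?a0 ?a1 ?a2 ?b0 ?b1 ?b2 in m1 m2 m3 m4 m5 seq; apply: pT1C => //; rewrite /VD /VT0 /VT1 /VT2 /VC; lra)
  | (rewrite ?a0 ?a1 ?a2 ?b0 ?b1 ?b2 in m1 m2 m3 m4 m5 seq; apply: pDT2 => //; rewrite /VD /VT0 /VT1 /VT2 /VC; lra)
  | (rewrite ?a0 ?a1 ?a2 ?b0 ?b1 ?b2 in m1 m2 m3 m4 m5 seq; apply: pT0T2 => //; rewrite /VD /VT0 /VT1 /VT2 /VC; lra)
  | (rewrite ?a0 ?a1 ?a2 ?b0 ?b1 ?b2 in m1 m2 m3 m4 m5 seq; apply: pT1T2 => //; rewrite /VD /VT0 /VT1 /VT2 /VC; lra)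
  | (exfalso; apply: mne; apply: same_s; apply/permP => i; case: (ord3P i) => [->|[->|->]]; by rewrite ?a0 ?a1 ?a2 ?b0 ?b1 ?b2)
  | (rewrite ?a0 ?a1 ?a2 ?b0 ?b1 ?b2 in m1 m2 m3 m4 m5 seq; apply: pT2C => //; rewrite /VD /VT0 /VT1 /VT2 /VC; lra)
  | (rewrite ?a0 ?a1 ?a2 ?b0 ?b1 ?b2 in m1 m2 m3 m4 m5 seq; apply: pT2C => //; rewrite /VD /VT0 /VT1 /VT2 /VC; lra)
  | (rewrite ?a0 ?a1 ?a2 ?b0 ?b1 ?b2 in m1 m2 m3 m4 m5 seq; apply: pDT0 => //; rewrite /VD /VT0 /VT1 /VT2 /VC; lra)
  | (rewrite ?a0 ?a1 ?a2 ?b0 ?b1 ?b2 in m1 m2 m3 m4 m5 seq; apply: pT0C => //; rewrite /VD /VT0 /VT1 /VT2 /VC; lra)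
  | (rewrite ?a0 ?a1 ?a2 ?b0 ?b1 ?b2 in m1 m2 m3 m4 m5 seq; apply: pT1C => //; rewrite /VD /VT0 /VT1 /VT2 /VC; lra)
  | (rewrite ?a0 ?a1 ?a2 ?b0 ?b1 ?b2 in m1 m2 m3 m4 m5 seq; apply: pT2C => //; rewrite /VD /VT0 /VT1 /VT2 /VC; lra)
  | (exfalso; apply: mne; apply: same_s; apply/permP => i; case: (ord3P i) => [->|[->|->]]; by rewrite ?a0 ?a1 ?a2 ?b0 ?b1 ?b2)
  | (exfalso; apply: mne; apply: inv_s; apply: inv_of => i; case: (ord3P i) => [->|[->|->]]; by rewrite ?a0 ?a1 ?a2 ?b0 ?b1 ?b2)
  | (rewrite ?a0 ?a1 ?a2 ?b0 ?b1 ?b2 in m1 m2 m3 m4 m5 seq; apply: pDT0 => //; rewrite /VD /VT0 /VT1 /VT2 /VC; lra)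
  | (rewrite ?a0 ?a1 ?a2 ?b0 ?b1 ?b2 in m1 m2 m3 m4 m5 seq; apply: pT0C => //; rewrite /VD /VT0 /VT1 /VT2 /VC; lra)
  | (rewrite ?a0 ?a1 ?a2 ?b0 ?b1 ?b2 in m1 m2 m3 m4 m5 seq; apply: pT1C => //; rewrite /VD /VT0 /VT1 /VT2 /VC; lra)
  | (rewrite ?a0 ?a1 ?a2 ?b0 ?b1 ?b2 in m1 m2 m3 m4 m5 seq; apply: pT2C => //; rewrite /VD /VT0 /VT1 /VT2 /VC; lra)
  | (exfalso; apply: mne; apply: inv_s; apply: inv_of => i; case: (ord3P i) => [->|[->|->]]; by rewrite ?a0 ?a1 ?a2 ?b0 ?b1 ?b2)
  | (exfalso; apply: mne; apply: same_s; apply/permP => i; case: (ord3P i) => [->|[->|->]]; by rewrite ?a0 ?a1 ?a2 ?b0 ?b1 ?b2) ].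
Qed.


Lemma argmin_ex k (A : 'M[RR]_3) (f g : 'I_k -> 'I_3) :
  exists s1 : 'S_k, forall s, trop_value A f g s1 <= trop_value A f g s.
Proof.
case: (@arg_minP _ _ _ (1%g : 'S_k) xpredT (trop_value A f g) isT) => s1 _ H.
by exists s1 => s; apply: H.
Qed.

Section Transfer.
Variables (A : 'M[RR]_3) (f g : 'I_3 -> 'I_3) (fi : injective f) (gi : injective g).
Let F : 'S_3 := perm fi.
Let G : 'S_3 := perm gi.
Let psi (s : 'S_3) : 'S_3 := (F^-1 * s * G)%g.

Lemma psiE s j : psi s j = g (s (F^-1 j))%g.
Proof. by rewrite /psi !permM permE. Qed.

Lemma val_fg s : trop_value A f g s = trop_value A id id (psi s).
Proof.
rewrite /trop_value [RHS](reindex_inj (@perm_inj _ F)); apply: eq_bigr => i _.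
by rewrite /= psiE permK permE.
Qed.

Lemma mono_fg s p q : sym_monomial f g s p q = sym_monomial id id (psi s) p q.
Proof.
rewrite /sym_monomial !card_cls -[RHS](card_preimset _ (@perm_inj _ F)).
apply: eq_card => i; rewrite !finset.in_set /= psiE permK permE.
by [].
Qed.

Lemma psiK t : psi (F * t * G^-1)%g = t.
Proof. by rewrite /psi !mulgA mulVg mul1g mulgKV. Qed.

Lemma sing_transfer : sym_trop_singular A id id -> sym_trop_singular A f g.
Proof.
move=> [t1 [t2 [tmin [teq [p [q tne]]]]]].
exists (F * t1 * G^-1)%g, (F * t2 * G^-1)%g; split; last split.
- by move=> s; rewrite !val_fg psiK.
- by rewrite !val_fg !psiK.
- by exists p, q; rewrite !mono_fg !psiK.
Qed.
End Transfer.

Definition q0 : 'I_2 := @Ordinal 2 0 isT.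
Definition q1 : 'I_2 := @Ordinal 2 1 isT.
Lemma ord2P (i : 'I_2) : i = q0 \/ i = q1.
Proof. by case: i => [[|[|m]] h]; [left|right|by []]; apply: val_inj. Qed.
Lemma q01 : (q0 == q1) = false. Proof. by []. Qed.
Lemma q10 : (q1 == q0) = false. Proof. by []. Qed.

Lemma perm2_cases (s : 'S_2) : (s q0 = q0 /\ s q1 = q1) \/ (s q0 = q1 /\ s q1 = q0).
Proof.
have d : s q0 != s q1 by rewrite (inj_eq perm_inj).
by case: (ord2P (s q0)) => a; case: (ord2P (s q1)) => b; rewrite a b in d; auto.
Qed.

Lemma mono2 (f g : 'I_2 -> 'I_3) (fi : injective f) (gi : injective g) (s s1 : 'S_2) :
  (forall p q, sym_monomial f g s p q = sym_monomial f g s1 p q) -> s = s1.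
Proof.
move=> H.
have eqp : forall s s' : 'S_2, s q0 = s' q0 -> s = s'.
  move=> t t' e; case: (perm2_cases t) => [[a0 a1]|[a0 a1]];
  case: (perm2_cases t') => [[b0 b1]|[b0 b1]]; rewrite ?a0 ?b0 in e; try discriminate;
  apply/permP => i; case: (ord2P i) => ->; by rewrite ?a0 ?a1 ?b0 ?b1.
case: (eqVneq (s q0) (s1 q0)) => [e|ne]; first exact: eqp.
exfalso.
have ne' : g (s q0) != g (s1 q0) by rewrite (inj_eq gi).
have e1 : s q1 = s1 q0.
  by case: (perm2_cases s) => [[a0 a1]|[a0 a1]]; case: (perm2_cases s1) => [[b0 b1]|[b0 b1]];
     rewrite ?a0 ?a1 ?b0 ?b1 in ne *.
have f01 : f q1 != f q0 by rewrite (inj_eq fi).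
have := H (f q0) (g (s1 q0)); rewrite /sym_monomial !card_cls.
have -> : #|[set i | (f i == f q0) && (g (s i) == g (s1 q0)) || (f i == g (s1 q0)) && (g (s i) == f q0)]%SET| = 0%N.
  apply: eq_card0 => i; rewrite finset.in_set; case: (ord2P i) => ->.
    by rewrite (negbTE ne') andbF /=; case: eqP => // h; rewrite h (negbTE ne').
  by rewrite (negbTE f01) /= e1; case: eqP => // h; rewrite -h (negbTE f01).
move/esym/eqP; apply/negP; rewrite -lt0n; apply/card_gt0P; exists q0.
by rewrite finset.in_set !eqxx.
Qed.

Definition pr (i j : 'I_3) (k : 'I_2) : 'I_3 := if k == q0 then i else j.

Lemma pr_inj (i j : 'I_3) : i != j -> injective (pr i j).
Proof.
move=> ij a b; case: (ord2P a) => ->; case: (ord2P b) => -> //; rewrite /pr /=.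
  by move=> e; move: ij; rewrite e eqxx.
by move=> e; move: ij; rewrite e eqxx.
Qed.

Lemma sum2R (F : 'I_2 -> RR) : \sum_(k < 2) F k = F q0 + F q1.
Proof.
rewrite !big_ord_recl big_ord0 addr0 /=.
have -> : (ord0 : 'I_2) = q0 by apply: val_inj.
by have -> : (lift q0 ord0 : 'I_2) = q1 by apply: val_inj.
Qed.

Lemma sing2 (A : 'M[RR]_3) (i j : 'I_3) (ij : i != j) :
  sym_trop_singular A (pr i j) (pr i j) -> A i i + A j j = A i j + A j i.
Proof.
move=> [s1 [s2 [_ [seq [p [q mne]]]]]].
move: seq; rewrite /trop_value !sum2R /pr /=.
case: (perm2_cases s1) => [[a0 a1]|[a0 a1]]; case: (perm2_cases s2) => [[b0 b1]|[b0 b1]];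
  rewrite ?a0 ?a1 ?b0 ?b1 ?q01 ?q10 ?eqxx /= => h.
- by exfalso; apply: mne; congr sym_monomial; apply/permP => k; case: (ord2P k) => ->; rewrite ?a0 ?a1 ?b0 ?b1.
- by [].
- by rewrite h.
- by exfalso; apply: mne; congr sym_monomial; apply/permP => k; case: (ord2P k) => ->; rewrite ?a0 ?a1 ?b0 ?b1.
Qed.


Lemma S1_one (s : 'S_1) : s = 1%g.
Proof. by apply/permP => i; rewrite !ord1; apply/val_inj; case: (s ord0) => [[|m] h]. Qed.

Lemma nz_minor1 (A : 'M[RR]_3) (L : 'I_3 -> 'I_3 -> series) :
  (forall i j, has_deg (L i j) (A i j)) -> has_nonzero_minor L 1.
Proof.
move=> Ld; exists (fun _ => o0), (fun _ => o0); split; last split.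
- by move=> a b _; rewrite (ord1 a) (ord1 b).
- by move=> a b _; rewrite (ord1 a) (ord1 b).
apply: (@lead_nonzero _ _ A L _ _ 1%g).
all: try exact: Ld.
all: by move=> s; rewrite (S1_one s).
Qed.

Lemma kle3 k (f : 'I_k -> 'I_3) : injective f -> leq k 3.
Proof. by move=> fi; have := fintype.leq_card f fi; rewrite !card_ord. Qed.

Lemma rank1_lift (A : 'M[RR]_3) : (forall i j, A i j = A j i) ->
  (forall i j, A i j = A i i / 2 + A j j / 2) -> exists L, sym_lift A L /\ rank_is L 1.
Proof.
move=> hs h.
pose E := fun i j : 'I_3 => mono (A i i / 2) * mono (A j j / 2).
pose F : 'M[MA]_(3, 1) := \matrix_(i, k) mono (A i i / 2).
have EF : forall i j, E i j = (F *m F^T) i j.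
  by move=> i j; rewrite !mxE big_ord1 !mxE.
have Ed : forall i j, has_deg (phi (E i j)) (A i j).
  move=> i j; have hij := h i j.
  rewrite /E (_ : _ * _ = sm [:: (1, A i i / 2 + A j j / 2)]); last first.
    by rewrite /sm !big_cons big_nil -!mono_mul /=; ring.
  degsolve.
exists (fun i j => phi (E i j)); split.
  split; first by move=> i j; rewrite /E mulrC.
  split; first by move=> i j; apply: hahn_phi.
  split => // i j e; have [nz _] := Ed i j.
  by move: nz; rewrite e /hzero eqxx.
split; first exact: (nz_minor1 Ed).
move=> k k2 [f [g [fi [gi]]]]; apply.
rewrite minor_phi.
have -> : \matrix_(i, j) E (f i) (g j) = \matrix_(i, j) (F *m F^T) (f i) (g j).
  by apply/matrixP => i j; rewrite mxE EF !mxE.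
rewrite submx_mul.
have := kle3 fi; move: f g fi gi k2.
case: k => [|[|[|[|k]]]] // f g fi gi _ _.
- by rewrite (@det_mul_small _ 1 0) phi0.
- by rewrite (@det_mul_small _ 1 1) phi0.
Qed.


Lemma nz_minor2 (A : 'M[RR]_3) (f0 g0 : 'I_2 -> 'I_3) (f0i : injective f0) (g0i : injective g0)
  (ns : ~ sym_trop_singular A f0 g0) (L : 'I_3 -> 'I_3 -> series) :
  sym_lift A L -> minor L f0 g0 <> hzero.
Proof.
move=> [_ [_ [_ Ld]]].
have [s1 smin] := argmin_ex A f0 g0.
apply: (@lead_nonzero _ _ A L _ _ s1) => // s vs.
suff -> : s = s1 by [].
apply: (mono2 f0i g0i) => p q; apply/eqP; apply/negPn/negP => hne.
apply: ns; exists s1, s; split; first by move=> t; apply/RleP.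
by split => //; exists p, q; apply/eqP; rewrite eq_sym.
Qed.

Theorem corollary2 (A : 'M[Rdefinitions.R]_3) (hsym : forall i j : 'I_3, A i j = A j i) :
  sym_kapranov_rank_is A 2 <-> sym_trop_rank_is A 2.
Proof.
split.
- move=> [[L0 [L0lift [_ L0r]]] Kmin]; split.
  + apply: NNPP => hno.
    have h2 : forall i j : 'I_3, i != j -> A i i + A j j = A i j + A j i.
      move=> i j ij; apply: (sing2 ij); apply: NNPP => ns; apply: hno.
      by exists (pr i j), (pr i j); split; [exact: pr_inj | split; [exact: pr_inj | exact: ns]].
    have h : forall i j, A i j = A i i / 2 + A j j / 2.
      move=> i j; case: (eqVneq i j) => [->|ij]; first lra.
      have := h2 i j ij; have := hsym i j; lra.
    have [L1 [L1l L1r]] := rank1_lift hsym h.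
    by have := Kmin L1 1%N L1l L1r.
  + move=> k f g fi gi ns.
    have k3 := kle3 fi.
    case: (leqP k 2) => // k2; exfalso.
    have ek : k = 3 by apply/eqP; rewrite eqn_leq k3 k2.
    subst k.
    have nsid : ~ sym_trop_singular A id id := fun h => ns (sing_transfer fi gi h).
    have [s1 smin] := argmin_ex A id id.
    have [_ [_ [_ Ld]]] := L0lift.
    have [LS _] := L0lift.
    apply: (L0r 3 (leqnn 3)); exists id, id; split => //; split => //.
    apply: (@lead_nonzero _ _ A L0 _ _ s1) => // s vs.
    have me : forall p q, sym_monomial id id s p q = sym_monomial id id s1 p q.
      move=> p q; apply/eqP; apply/negPn/negP => hne.
      apply: nsid; exists s1, s; split; first by move=> t; apply/RleP.
      by split => //; exists p, q; apply/eqP; rewrite eq_sym.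
    case: (same_mono3 me) => ->; first by [].
    by rewrite lterm_inv.
- move=> [[f0 [g0 [f0i [g0i ns0]]]] Tall].
  have sing : sym_trop_singular A id id.
    apply: NNPP => ns; have := Tall 3 id id (fun x y h => h) (fun x y h => h) ns; by [].
  have [L [Llift Lm]] := sing_good hsym sing.
  have nz := nz_minor2 f0i g0i ns0.
  split.
    exists L; split => //; split.
      by exists f0, g0; split => //; split => //; apply: nz.
    move=> k k3 [f [g [fi [gi]]]]; apply.
    have := kle3 fi; move: f g fi gi k3; case: k => [|[|[|[|k]]]] f g fi gi ka kb //.
  move=> L' s L'l [_ L'r]; rewrite leqNgt; apply/negP => s2.
  apply: (L'r 2 s2); exists f0, g0; split => //; split => //; exact: nz.
Qed.
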